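(* Let $H=(S_0,e_0,S_1,\dots)$ be a history sequence of the Simpler Lazy Set algorithm, let $S_i$ be a state of $H$, and let $a\neq b$ be active addresses of $S_i$ such that there is a path $Q$ from $a$ to $b$ in $S_i$ but there is no path from $a$ to $b$ in $S_{i+1}$. Let $b^-$ be the address on $Q$ preceding $b$ (so $\mathrm{Next}^{S_i}(b^-)=b$). Then (1) $b^-$ and $b$ are on the main branch of $S_i$, and (2) $(S_i,e_i,S_{i+1})$ is an $\mathrm{RM}$ step that removes $b$ from the main branch by setting $\mathrm{Next}^{S_{i+1}}(b^-)=\mathrm{Next}^{S_i}(b)$.
   Context: Simpler Lazy Set algorithm. Fix a countably infinite set $A$ of addresses with distinguished $\mathsf H,\mathsf T$; $\mathrm{Number}=\mathbb N\cup\{-1,\infty\}$. A state $S$: set $\mathrm{Active}^S\subseteq A$, $\mathrm{Next}^S:\mathrm{Active}^S\setminus\{\mathsf T\}\to A$, $\mathrm{Val}^S:\mathrm{Active}^S\to\mathrm{Number}$, and for each process $p$: $PC_p\in\{0,1,2,3.1,\dots,3.5\}$, $x_p\in\mathbb N$, $\mathrm{curr}_p\in A$, $\mathrm{status}_p$. $S$ is normal if $\mathrm{Active}^S$ is finite, $\mathsf H,\mathsf T$ are active with values $-1,\infty$, other active addresses have values in $\mathbb N$, and for active $a\neq\mathsf T$, $\mathrm{Next}(a)$ is active with $\mathrm{Val}(a)<\mathrm{Val}(\mathrm{Next}(a))$. A path is a sequence $a_1,\dots,a_m$ ($m>1$) of active addresses with $\mathrm{Next}(a_i)=a_{i+1}$;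 the main branch is the path from $\mathsf H$ to $\mathsf T$. Initial state: $\mathrm{Active}=\{\mathsf H,\mathsf T\}$, $\mathrm{Next}(\mathsf H)=\mathsf T$, all $PC_p=0$. Steps $(S,e,T)$ of a process $p$ on a normal $S$: (i) invocation: $PC_p$ from $0$ to $1$, $2$ or $3.1$, with $x_p\in\mathbb N$ arbitrary; (ii) failure: $PC_p$ from $1$ or $2$ to $0$ with $\chi(e)=f$, nothing else changes; (iii) $\mathrm{AD}(x)$ ($x=x_p$, $PC_p$ from $1$ to $0$): with $\mathfrak p$ the main-branch address having $\mathrm{Val}(\mathfrak p)<x\le\mathrm{Val}(\mathrm{Next}(\mathfrak p))$: if $\mathrm{Val}(\mathrm{Next}(\mathfrak p))=x$, no other change, $\chi(e)=1$; else a new address $a\notin\mathrm{Active}^S$ is made active with $\mathrm{Val}(a)=x$, $\mathrm{Next}^T(\mathfrak p)=a$, $\mathrm{Next}^T(a)=\mathrm{Next}^S(\mathfrak p)$, $\chi(e)=0$; (iv) $\mathrm{RM}(x)$ ($PC_p$ from $2$ to $0$): if the main branch has an address $cu$ of value $x$, with $pred$ its main-branch predecessor, set $\mathrm{Next}^T(pred)=\mathrm{Next}^S(cu)$, $\chi(e)=1$ ($e$ removes $cu$ from the main branch); else no change, $\chi(e)=0$; (v) CONTAINS$(x)$ lines, each an atomic step changing only $\mathrm{curr}_p,PC_p,\mathrm{status}_p$: 3.1 $\mathrm{curr}_p:=\mathsf H$; 3.2/3.3 $\mathrm{curr}_p:=\mathrm{Next}(\mathrm{curr}_p)$; 3.4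 if $\mathrm{Val}(\mathrm{curr}_p)\ge x$ go to 3.5 else to 3.3; 3.5 return $1$ if $\mathrm{Val}(\mathrm{curr}_p)=x$ else $0$, $PC_p:=0$. A history sequence is $(S_0,e_0,S_1,\dots)$ with $S_0$ the initial state and each $(S_i,e_i,S_{i+1})$ a step of some process. *)

(* Defs.v *)
From Stdlib Require Import List Arith.
Import ListNotations.
Set Implicit Arguments.

Inductive num : Type := NegOne | Fin (n : nat) | Inf.

Definition num_lt (u v : num) : Prop :=
  match u, v with
  | NegOne, NegOne => False
  | NegOne, _ => True
  | Fin m, Fin n => m < n
  | Fin _, Inf => True
  | _, _ => False
  end.

Definition num_le (u v : num) : Prop := num_lt u v \/ u = v.

Inductive pcv : Type := L0 | L1 | L2 | L31 | L32 | L33 | L34 | L35.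

Inductive res : Type := R0 | R1 | Rf.

Inductive op : Type :=
  | OInv | OFail | OAD | ORM | OC31 | OC32 | OC33 | OC34 | OC35.

(* an event: executing process, kind of step, output chi (None if undefined) *)
Record event (P : Type) : Type := mkEvent {
  eproc : P;
  eop : op;
  echi : option res }.

(* A state.  Next and Val are total functions, but only their values on
   Active \ {T} (resp. Active) are meaningful; all conditions below only
   look at those values. *)
Record state (A P : Type) : Type := mkState {
  active : A -> Prop;
  next : A -> A;
  val : A -> num;
  pc : P -> pcv;
  xv : P -> nat;
  curr : P -> A;
  status : P -> option res }.

Section Model.
Variables (A P : Type) (Hd Tl : A).

Definition normal (S : state A P) : Prop :=
  (exists l : list A, forall a, active S a -> In a l) /\
  active S Hd /\ active S Tl /\ val S Hd = NegOne /\ val S Tl = Inf /\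
  (forall a, active S a -> a <> Hd -> a <> Tl -> exists n, val S a = Fin n) /\
  (forall a, active S a -> a <> Tl ->
     active S (next S a) /\ num_lt (val S a) (val S (next S a))).

(* consecutive elements linked by Next (Next undefined at T) *)
Fixpoint chain (S : state A P) (l : list A) : Prop :=
  match l with
  | x :: ((y :: _) as t) => x <> Tl /\ next S x = y /\ chain S t
  | _ => True
  end.

Definition path (S : state A P) (l : list A) : Prop :=
  1 < length l /\ Forall (active S) l /\ chain S l.

Definition path_ft (S : state A P) (a b : A) (l : list A) : Prop :=
  path S l /\ exists mid, l = a :: mid ++ [b].

Definition on_main (S : state A P) (c : A) : Prop :=
  exists l, path_ft S Hd Tl l /\ In c l.

Definition initial (S : state A P) : Prop :=
  (forall a, active S a <-> a = Hd \/ a = Tl) /\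
  next S Hd = Tl /\ val S Hd = NegOne /\ val S Tl = Inf /\
  (forall p, pc S p = L0).

Definition same_shared (S T : state A P) : Prop :=
  (forall a, active T a <-> active S a) /\
  (forall a, active S a -> a <> Tl -> next T a = next S a) /\
  (forall a, active S a -> val T a = val S a).

Definition others_same (S T : state A P) (p : P) : Prop :=
  forall q, q <> p ->
    pc T q = pc S q /\ xv T q = xv S q /\ curr T q = curr S q /\
    status T q = status S q.

Definition step_body (S : state A P) (e : event P) (T : state A P) : Prop :=
  let p := eproc e in
  let x := xv S p in
  others_same S T p /\
  match eop e with
  | OInv =>
      pc S p = L0 /\ (pc T p = L1 \/ pc T p = L2 \/ pc T p = L31) /\
      curr T p = curr S p /\ status T p = status S p /\
      same_shared S T /\ echi e = None
  | OFail =>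
      (pc S p = L1 \/ pc S p = L2) /\ pc T p = L0 /\
      xv T p = x /\ curr T p = curr S p /\ status T p = status S p /\
      same_shared S T /\ echi e = Some Rf
  | OAD =>
      pc S p = L1 /\ pc T p = L0 /\
      xv T p = x /\ curr T p = curr S p /\ status T p = status S p /\
      exists pp, on_main S pp /\ pp <> Tl /\
        num_lt (val S pp) (Fin x) /\ num_le (Fin x) (val S (next S pp)) /\
        ((val S (next S pp) = Fin x /\ same_shared S T /\ echi e = Some R1)
         \/
         (val S (next S pp) <> Fin x /\
          exists a, ~ active S a /\
            (forall c, active T c <-> active S c \/ c = a) /\
            val T a = Fin x /\
            (forall c, active S c -> val T c = val S c) /\
            next T pp = a /\ next T a = next S pp /\
            (forall c, active S c -> c <> Tl -> c <> pp -> next T c = next S c) /\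
            echi e = Some R0))
  | ORM =>
      pc S p = L2 /\ pc T p = L0 /\
      xv T p = x /\ curr T p = curr S p /\ status T p = status S p /\
      ((exists cu pred, on_main S cu /\ val S cu = Fin x /\
          on_main S pred /\ pred <> Tl /\ next S pred = cu /\
          (forall c, active T c <-> active S c) /\
          (forall c, active S c -> val T c = val S c) /\
          next T pred = next S cu /\
          (forall c, active S c -> c <> Tl -> c <> pred -> next T c = next S c) /\
          echi e = Some R1)
       \/
       ((~ exists cu, on_main S cu /\ val S cu = Fin x) /\
          same_shared S T /\ echi e = Some R0))
  | OC31 =>
      pc S p = L31 /\ pc T p = L32 /\ curr T p = Hd /\
      xv T p = x /\ status T p = status S p /\ same_shared S T /\ echi e = None
  | OC32 =>
      pc S p = L32 /\ pc T p = L34 /\ curr T p = next S (curr S p) /\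
      xv T p = x /\ status T p = status S p /\ same_shared S T /\ echi e = None
  | OC33 =>
      pc S p = L33 /\ pc T p = L34 /\ curr T p = next S (curr S p) /\
      xv T p = x /\ status T p = status S p /\ same_shared S T /\ echi e = None
  | OC34 =>
      pc S p = L34 /\
      (num_le (Fin x) (val S (curr S p)) -> pc T p = L35) /\
      (~ num_le (Fin x) (val S (curr S p)) -> pc T p = L33) /\
      curr T p = curr S p /\
      xv T p = x /\ status T p = status S p /\ same_shared S T /\ echi e = None
  | OC35 =>
      let r := if (match val S (curr S p) with Fin n => Nat.eqb n x | _ => false end)
               then R1 else R0 in
      pc S p = L35 /\ pc T p = L0 /\ curr T p = curr S p /\
      xv T p = x /\ status T p = Some r /\ same_shared S T /\ echi e = Some r
  end.

Definition step (S : state A P) (e : event P) (T : state A P) : Prop :=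
  normal S /\ step_body S e T.

(* (a prefix of length n of) a history sequence S_0, e_0, S_1, ..., S_n *)
Definition history (Sq : nat -> state A P) (Eq : nat -> event P) (n : nat) : Prop :=
  initial (Sq 0) /\ forall i, i < n -> step (Sq i) (Eq i) (Sq (S i)).

End Model.

(* Main.v *)
Require Import Defs.
From Stdlib Require Import List Arith.
From Stdlib Require Import Relations Classical Lia.
Import ListNotations.

Definition ST {A P : Type} (Tl : A) (T : state A P) (x y : A) : Prop :=
  active T x /\ x <> Tl /\ next T x = y /\ active T y.

Lemma last_cons {A : Type} (y x : A) l : last (y::l) x = last l y.
Proof.
  revert y x. induction l as [|z l IH]; intros y x. reflexivity.
  change (last (z :: l) x = last (z :: l) y). rewrite !IH. reflexivity.
Qed.

Lemma rt_path {A P : Type} (Tl : A) (T : state A P) x y :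
  clos_refl_trans_1n A (ST Tl T) x y -> x = y \/ exists l, path_ft Tl T x y l.
Proof.
  induction 1 as [|x y0 z Hs Hr IH]. left; auto.
  right. destruct Hs as (hx & hxT & hn & hy).
  destruct IH as [<- | (l & (hlen & hF & hc) & mid & ->)].
  - exists [x; y0]. split. split. simpl; auto. split. repeat constructor; auto.
    simpl. auto. exists []. reflexivity.
  - exists (x :: y0 :: mid ++ [z]). split. split. simpl in *; lia.
    split. constructor; auto.
    change (x <> Tl /\ next T x = y0 /\ chain Tl T (y0 :: mid ++ [z])). auto.
    exists (y0::mid). reflexivity.
Qed.

Lemma chain_reach {A P : Type} (Tl : A) (S T : state A P) :
  (forall u, active S u -> u <> Tl -> active S (next S u) ->
     clos_refl_trans A (ST Tl T) u (next S u)) ->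
  forall l x, chain Tl S (x::l) -> Forall (active S) (x::l) ->
  clos_refl_trans A (ST Tl T) x (last l x).
Proof.
  intros H l. induction l as [|y l IH]; intros x hc hF. simpl. apply rt_refl.
  rewrite last_cons. destruct hc as (hx & hn & hc).
  pose proof (Forall_inv hF) as ax. pose proof (Forall_inv_tail hF) as hF'.
  pose proof (Forall_inv hF') as ay.
  apply rt_trans with y. rewrite <- hn. apply H; auto. rewrite hn; auto.
  apply IH; auto.
Qed.

Lemma rm_reach {A P : Type} (Tl : A) (S T : state A P) pred cu :
  (forall c, active T c <-> active S c) -> active S pred -> pred <> Tl ->
  next S pred = cu -> next T pred = next S cu ->
  (forall c, active S c -> c <> Tl -> c <> pred -> next T c = next S c) ->
  forall k l x, length l <= k -> chain Tl S (x::l) -> Forall (active S) (x::l) ->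
  (forall l0, x::l <> l0 ++ [pred; cu]) -> clos_refl_trans A (ST Tl T) x (last l x).
Proof.
  intros hact hap hpT hpc hnT hoth k. induction k as [|k IH]; intros l x hlen hc hF hnot.
  - destruct l; [apply rt_refl | simpl in hlen; lia].
  - destruct l as [|y l']. apply rt_refl.
    destruct hc as (hx & hn & hc).
    pose proof (Forall_inv hF) as ax. pose proof (Forall_inv_tail hF) as hF'.
    pose proof (Forall_inv hF') as ay.
    destruct (classic (x = pred)) as [-> | hxp].
    + rewrite hpc in hn; subst y.
      destruct l' as [|w l''].
      * exfalso. apply (hnot []). reflexivity.
      * destruct hc as (hcT & hcw & hc').
        pose proof (Forall_inv_tail hF') as hF''. pose proof (Forall_inv hF'') as aw.
        rewrite last_cons, last_cons.
        apply rt_trans with w. apply rt_step. unfold ST.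
        split. apply hact; auto. split; auto. split. rewrite hnT; auto. apply hact; auto.
        apply IH. simpl in hlen; lia. exact hc'. exact hF''.
        intros l0 e. apply (hnot (pred::cu::l0)). rewrite e. reflexivity.
    + rewrite last_cons. apply rt_trans with y. apply rt_step. unfold ST.
      split. apply hact; auto. split; auto. split. rewrite hoth; auto. apply hact; auto.
      apply IH; auto. simpl in hlen; lia.
      intros l0 e. apply (hnot (x::l0)). rewrite e; reflexivity.
Qed.

Lemma ss_reach {A P : Type} (Tl : A) (S T : state A P) :
  same_shared Tl S T ->
  forall u, active S u -> u <> Tl -> active S (next S u) ->
     clos_refl_trans A (ST Tl T) u (next S u).
Proof.
  intros (h1 & h2 & h3) u hu hT hn. apply rt_step. unfold ST.
  split. apply h1; auto. split; auto. split. apply h2; auto. apply h1; auto.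
Qed.

Lemma ad_reach {A P : Type} (Tl : A) (S T : state A P) pp a' :
  ~ active S a' -> active S Tl -> (forall c, active T c <-> active S c \/ c = a') ->
  next T pp = a' -> next T a' = next S pp ->
  (forall c, active S c -> c <> Tl -> c <> pp -> next T c = next S c) ->
  forall u, active S u -> u <> Tl -> active S (next S u) ->
     clos_refl_trans A (ST Tl T) u (next S u).
Proof.
  intros hna hT hact hpp ha' hoth u hu huT hn.
  destruct (classic (u = pp)) as [-> | hup].
  - apply rt_trans with a'; apply rt_step; unfold ST.
    + split. apply hact; auto. split; auto. split; auto. apply hact; auto.
    + split. apply hact; auto. split. intro e; subst; auto. split; auto. apply hact; auto.
  - apply rt_step. unfold ST.
    split. apply hact; auto. split; auto. split. apply hoth; auto. apply hact; auto.
Qed.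

Theorem lemma4p10
  (A P : Type)
  (hA : exists f : nat -> A,
          (forall m k, f m = f k -> m = k) /\ (forall a, exists m, f m = a))
  (Hd Tl : A) (hHT : Hd <> Tl)
  (Sq : nat -> state A P) (Eq : nat -> event P) (n : nat)
  (hH : history Hd Tl Sq Eq n)
  (i : nat) (hi : i < n)
  (a b : A) (ha : active (Sq i) a) (hb : active (Sq i) b) (hab : a <> b)
  (Q : list A) (bm : A)
  (hQ : path_ft Tl (Sq i) a b Q)
  (hbm : exists Q0, Q = Q0 ++ [bm; b])
  (hno : ~ exists Q', path_ft Tl (Sq (S i)) a b Q') :
  on_main Hd Tl (Sq i) bm /\ on_main Hd Tl (Sq i) b /\
  eop (Eq i) = ORM /\ pc (Sq i) (eproc (Eq i)) = L2 /\
  val (Sq i) b = Fin (xv (Sq i) (eproc (Eq i))) /\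
  echi (Eq i) = Some R1 /\
  next (Sq (S i)) bm = next (Sq i) b.
Proof.
  destruct hH as [_ hst]. destruct (hst i hi) as [hnorm hbody].
  destruct hQ as [[_ [hF hc]] [mid hQe]].
  assert (hreach: clos_refl_trans A (ST Tl (Sq (S i))) a b -> False).
  { intro r. apply clos_rt_rt1n in r. destruct (rt_path Tl (Sq (S i)) a b r) as [e|hp]. contradiction.
    apply hno. exact hp. }
  subst Q.
  assert (hlast : last (mid ++ [b]) a = b) by apply last_last.
  assert (hgen : (forall u, active (Sq i) u -> u <> Tl -> active (Sq i) (next (Sq i) u) ->
     clos_refl_trans A (ST Tl (Sq (S i))) u (next (Sq i) u)) -> False).
  { intro H. apply hreach. rewrite <- hlast. apply (chain_reach Tl (Sq i) (Sq (S i))); auto. }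
  assert (hTa : active (Sq i) Tl) by (destruct hnorm as (_ & _ & h & _); exact h).
  unfold step_body in hbody. destruct hbody as [_ hB].
  destruct (eop (Eq i)) eqn:Eop.
  all: try (exfalso; apply hgen; apply ss_reach; decompose [and] hB; assumption).
  - exfalso. destruct hB as (_ & _ & _ & _ & _ & pp & _ & _ & _ & _ & hc2).
    destruct hc2 as [(_ & hss & _) | (_ & a' & hna & hact & _ & _ & hpp & ha' & hoth & _)].
    + apply hgen; apply ss_reach; assumption.
    + apply hgen; eapply ad_reach; eauto.
  - destruct hB as (hpc & _ & _ & _ & _ & hc2).
    destruct hc2 as [(cu & pred & hmc & hvc & hmp & hpT & hpc' & hact & _ & hnT & hoth & hchi) | (_ & hss & _)].
    + destruct (classic (exists l0, a :: mid ++ [b] = l0 ++ [pred; cu])) as [[l0 e] | hne].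
      * destruct hbm as [Q0 e2]. rewrite e2 in e.
        replace (Q0 ++ [bm; b]) with ((Q0 ++ [bm]) ++ [b]) in e by (rewrite <- app_assoc; reflexivity).
        replace (l0 ++ [pred; cu]) with ((l0 ++ [pred]) ++ [cu]) in e by (rewrite <- app_assoc; reflexivity).
        apply app_inj_tail in e. destruct e as [e <-]. apply app_inj_tail in e. destruct e as [_ <-].
        repeat split; auto.
      * exfalso. apply hreach. rewrite <- hlast.
        assert (hpa : active (Sq i) pred) by (destruct hmp as (l & ((_ & hl & _) & _) & hin);
          rewrite Forall_forall in hl; auto).
        eapply (rm_reach Tl (Sq i) (Sq (S i)) pred cu hact hpa hpT hpc' hnT hoth (length (mid ++ [b])));
          eauto.
    + exfalso; apply hgen; apply ss_reach; assumption.
Qed.
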